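(* Let $m,n$ be positive integers, let $\bm{D}_0\in\mathbb{R}^{m\times m}$ be invertible, let $\bm{X}_0\in\mathbb{R}^{m\times n}$, and let $\bm{Y}=\bm{D}_0\bm{X}_0$. Let $\Omega\subseteq[m]\times[n]$ be the support of $\bm{X}_0$ (the set of index pairs of its nonzero entries) and $\Omega^c$ its complement. Consider the linear system in the unknowns $\bm{H}\in\mathbb{R}^{m\times m}$ and $\bm{X}\in\mathbb{R}^{m\times n}$: $$\left[\bm{Y}^{T},-\bm{I}_{n\times n}\right]\left[\begin{array}{c}\bm{H}^{T}\\ \bm{X}^{T}\end{array}\right]=\bm{0}_{n\times m}\quad\text{and}\quad \mathcal{P}_{\Omega^{c}}(\bm{X})=\bm{0},$$ i.e. $\bm{H}\bm{Y}=\bm{X}$ and $\bm{X}_{i,j}=0$ for all $(i,j)\in\Omega^c$. Then this system has at least $m$ linearly independent solutions, where a solution is identified with the matrix $\left[\bm{H},\bm{X}\right]^{T}\in\mathbb{R}^{(m+n)\times m}$.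
   Context: $[n]=\{1,\dots,n\}$. For a matrix $\bm{X}$ and an index set $\Omega^c$, $\mathcal{P}_{\Omega^c}(\bm{X})$ denotes the vector of entries of $\bm{X}$ indexed by $\Omega^c$. *)

(* Defs.v *)
From HB Require Import structures.
From mathcomp Require Import all_boot all_order all_algebra.
Set Implicit Arguments. Unset Strict Implicit. Unset Printing Implicit Defensive.
Import GRing.Theory Num.Theory.
Local Open Scope ring_scope.

Definition is_solution (R : realFieldType) (m n : nat)
    (Y X0 : 'M[R]_(m, n)) (S : 'M[R]_(m + n, m)) : Prop :=
  exists (H : 'M[R]_m) (X : 'M[R]_(m, n)),
    [/\ S = col_mx H^T X^T,
        row_mx Y^T (- (1%:M : 'M[R]_n)) *m S = 0
      & forall (i : 'I_m) (j : 'I_n), X0 i j = 0 -> X i j = 0].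

(* Main.v *)
Require Import Defs.
From HB Require Import structures.
From mathcomp Require Import all_boot all_order all_algebra.
Import GRing.Theory Num.Theory.
Local Open Scope ring_scope.

Theorem proposition1 (R : realFieldType) (m n : nat) (Hm : (0 < m)%N) (Hn : (0 < n)%N)
    (D0 : 'M[R]_m) (X0 Y : 'M[R]_(m, n))
    (HD0 : D0 \in unitmx) (HY : Y = D0 *m X0) :
  exists s : seq 'M[R]_(m + n, m),
    [/\ size s = m, free s & forall S, S \in s -> is_solution Y X0 S].
Proof.
pose F (i : 'I_m) : 'M[R]_(m + n, m) :=
  col_mx (delta_mx i i *m invmx D0)^T (delta_mx i i *m X0)^T.
exists [tuple F i | i < m]; split.
- by rewrite size_tuple.
- apply/freeP => k Hk j.
  have H1 : \sum_i k i *: (delta_mx i i *m invmx D0 : 'M[R]_m)^T = 0.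
    have E : usubmx (\sum_(i < m) k i *: [tuple F i0 | i0 < m]`_i)
        = \sum_i k i *: (delta_mx i i *m invmx D0 : 'M[R]_m)^T.
      apply/matrixP => a b; rewrite !mxE !summxE; apply: eq_bigr => i _.
      by rewrite -tnth_nth tnth_mktuple mxE [in RHS]mxE col_mxEu !mxE.
    by rewrite -E Hk linear0.
  have H2 : (\sum_i k i *: (delta_mx i i : 'M[R]_m)) = 0.
    have E : (\sum_i k i *: (delta_mx i i : 'M[R]_m))
        = (\sum_i k i *: (delta_mx i i *m invmx D0 : 'M[R]_m)^T)^T *m D0.
      rewrite raddf_sum /= mulmx_suml; apply: eq_bigr => i _.
      by rewrite linearZ /= trmxK -scalemxAl -mulmxA mulVmx // mulmx1.
    by rewrite E H1 trmx0 mul0mx.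
  have := congr1 (fun M : 'M[R]_m => M j j) H2.
  rewrite summxE mxE (bigD1 j) //= big1 ?addr0.
    by rewrite !mxE !eqxx mulr1.
  by move=> i /negbTE Hij; rewrite !mxE eq_sym Hij mulr0.
- move=> S /mapP [i _ ->].
  exists (delta_mx i i *m invmx D0), (delta_mx i i *m X0); split => //.
    rewrite mul_row_col HY -trmx_mul -mulmxA (mulmxA (invmx D0)) mulVmx //.
    by rewrite mul1mx mulNmx mul1mx subrr.
  move=> a b Hab; rewrite mxE (bigD1 i) //= big1 ?addr0.
    rewrite !mxE; case: eqP => [<-|_] /=; by rewrite ?Hab ?mulr0 ?mul0r.
  by move=> l /negbTE Hl; rewrite mxE Hl andbF mul0r.
Qed.
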